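(* Suppose $t_i^{(m)},g_i^{(m)}\in\mathbb{C}$ ($m,i\in\mathbb{Z}$) satisfy $$\left(i-\tfrac{n}{2}\right)t_i^{(m)}=\left(\tfrac{3m}{2}-n-i\right)g_{n-m+i}^{(n)}\quad\text{for all }m,n,i\in\mathbb{Z}.$$ Then $t_i^{(m)}=g_i^{(m)}=0$ for all $m,i\in\mathbb{Z}$. *)

(* Defs.v *)
From HB Require Import structures.
From mathcomp Require Import all_boot all_order all_algebra.
From mathcomp Require Import complex.
From mathcomp Require Import reals.
Set Implicit Arguments.
Unset Strict Implicit.
Unset Printing Implicit Defensive.
Import Order.TTheory GRing.Theory Num.Theory.

(* Main.v *)
Require Import Defs.
From HB Require Import structures.
From mathcomp Require Import all_boot all_order all_algebra.
From mathcomp Require Import complex.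
From mathcomp Require Import reals.
From mathcomp Require Import ring lra zify.
Import GRing.Theory Num.Theory.
Local Open Scope ring_scope.

Lemma aux_k (a m : int) : a = a*a + (m-a)*(m-a)+1 -> False.
Proof.
move=> e.
have h1 : 0 <= (m-a)*(m-a) by rewrite -expr2 sqr_ge0.
have h2 : a <= a*a.
  have [ha|ha] : (a <= 0 \/ 1 <= a) by lia.
  - have : 0 <= a * a by rewrite -expr2 sqr_ge0. lia.
  - by rewrite ler_peMr //; lia.
lia.
Qed.

Theorem proposition2p2 (R : realType) (t g : int -> int -> R[i])
  (H : forall m n i : int,
     (i%:~R - n%:~R / 2) * t m i
     = (3 * m%:~R / 2 - n%:~R - i%:~R) * g n (n - m + i)) :
  forall m i : int, t m i = 0 /\ g m i = 0.
Proof.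
have h32 : (3 / 2 : R[i]) != 0.
  by rewrite mulf_neq0 // ?invr_eq0 ?(@pnatr_eq0 R[i] 3) ?(@pnatr_eq0 R[i] 2).
have h12 : (1 / 2 : R[i]) != 0.
  by rewrite mulf_neq0 // ?oner_eq0 ?invr_eq0 ?(@pnatr_eq0 R[i] 2).
have S1 : forall k j : int, j != k -> g (2 * k) j = 0.
  move=> k j hjk.
  have := H (3 * k - j) (2 * k) k.
  have -> : 2 * k - (3 * k - j) + k = j by ring.
  have hz : (k%:~R - (2 * k)%:~R / 2 : R[i]) = 0.
    rewrite intrM /=. field; done.
  rewrite hz mul0r.
  move=> /esym /eqP; rewrite mulf_eq0 => /orP [/eqP hc|/eqP //].
  have : (k - j)%:~R * (3 / 2) = (0 : R[i]).
    apply: (eq_trans _ hc). rewrite !intrM !intrB !intrM /=. field; done.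
  move/eqP; rewrite mulf_eq0 (negbTE h32) orbF intr_eq0 subr_eq0 => hkj.
  by rewrite eq_sym hkj in hjk.
have S2 : forall m i : int, t m i = 0.
  move=> m i.
  pose k : int := i ^+ 2 + (m - i) ^+ 2 + 1.
  have := H m (2 * k) i.
  rewrite S1; last first.
    apply/negP => /eqP e. rewrite /k !expr2 in e. nia.
  rewrite mulr0 => /eqP; rewrite mulf_eq0 => /orP [/eqP hc|/eqP //].
  have : ((i - k)%:~R : R[i]) = 0.
    apply: (eq_trans _ hc). rewrite intrM intrB /=. field; done.
  move/eqP; rewrite intr_eq0 subr_eq0 => /eqP e. rewrite /k !expr2 in e. exfalso; exact: aux_k e.
move=> N j; split; first exact: S2.
have := H (2 * j + 1) N (3 * j + 1 - N).
have -> : N - (2 * j + 1) + (3 * j + 1 - N) = j by ring.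
rewrite S2 mulr0 => /esym /eqP; rewrite mulf_eq0 => /orP [/eqP hc|/eqP //].
have : (1 / 2 : R[i]) = 0.
  apply: (eq_trans _ hc). rewrite intrB !intrD !intrM. field; done.
by move/eqP; rewrite (negbTE h12).
Qed.
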